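(* Let $S$ be a MANS-semigroup with $\mathrm{msg}(S)=\{n_1<n_2<\cdots<n_e\}$, where $2\leq e\leq n_1-1$, and let $\mathrm{Ap}(S,n_1)=\{w(0),w(1),\ldots,w(n_1-1)\}$ with $w(i)$ the least element of $S$ congruent to $i$ modulo $n_1$. If $n_{e+1}\in\mathbb{N}$ satisfies $n_e<n_{e+1}$, $n_e\bmod n_1<n_{e+1}\bmod n_1$, and $w(n_{e+1}\bmod n_1-1)<n_{e+1}<w(n_{e+1}\bmod n_1)$, then $S'=\langle n_1,\ldots,n_e,n_{e+1}\rangle$ is a MANS-semigroup with $\mathrm{e}(S')=\mathrm{e}(S)+1$.
   Context: $\mathbb{N}=\{0,1,2,\ldots\}$. A numerical semigroup is a subset $S\subseteq\mathbb{N}$ closed under addition, containing $0$, with $\mathbb{N}\setminus S$ finite; $\langle A\rangle$ is the submonoid generated by $A$; $\mathrm{msg}(S)$ is the unique finite minimal system of generators and $\mathrm{e}(S)=|\mathrm{msg}(S)|$. For $n\in S\setminus\{0\}$, $\mathrm{Ap}(S,n)=\{s\in S:s-n\notin S\}$. $S$ is a MANS-semigroup if $w(1)<\cdots<w(\mathrm{m}(S)-1)$, where $\mathrm{m}(S)$ is the least element of $S\setminus\{0\}$ and $w(i)$ the least element of $S$ congruent to $i$ modulo $\mathrm{m}(S)$. $a\bmod b$ is the remainder of the division of $a$ by $b$. *)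

(* Defs.v *)
From mathcomp Require Import all_boot.
Set Implicit Arguments. Unset Strict Implicit. Unset Printing Implicit Defensive.

Definition numerical_semigroup (S : nat -> Prop) : Prop :=
  [/\ S 0, (forall x y, S x -> S y -> S (x + y))
    & exists N, forall n, N <= n -> S n].

Inductive gen (A : seq nat) : nat -> Prop :=
| gen0 : gen A 0
| genS : forall x a, a \in A -> gen A x -> gen A (x + a).

Definition is_msg (S : nat -> Prop) (A : seq nat) : Prop :=
  [/\ uniq A, (forall x, gen A x <-> S x)
    & forall B : seq nat, {subset B <= A} -> (exists2 a, a \in A & a \notin B) ->
        ~ (forall x, gen B x <-> S x)].

Definition is_least (P : nat -> Prop) (x : nat) : Prop :=
  P x /\ forall y, P y -> x <= y.

Definition is_mult (S : nat -> Prop) (m : nat) : Prop :=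
  is_least (fun x => S x /\ 0 < x) m.

Definition is_w (S : nat -> Prop) (m i w : nat) : Prop :=
  is_least (fun x => S x /\ x %% m = i %% m) w.

Definition MANS (S : nat -> Prop) : Prop :=
  numerical_semigroup S /\
  forall m, is_mult S m ->
    forall i j wi wj, 1 <= i -> i < j -> j < m ->
      is_w S m i wi -> is_w S m j wj -> wi < wj.

(* Main.v *)
Require Import Defs.
From mathcomp Require Import all_boot zify.
From Stdlib Require Import Classical.

Lemma gen_add A u v : gen A u -> gen A v -> gen A (u + v).
Proof.
move=> Hu; elim=> [|y a Ha _ IH]; first by rewrite addn0.
by rewrite addnA; apply: genS.
Qed.

Lemma gen_sub A B u : {subset A <= B} -> gen A u -> gen B u.
Proof. move=> sAB; elim=> [|y a Ha _ IH]; [exact: gen0 | exact: genS (sAB _ Ha) IH]. Qed.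

Lemma gen_mem A a : a \in A -> gen A a.
Proof. move=> Ha; rewrite -[a]add0n; exact: genS Ha (gen0 _). Qed.

Lemma gen_gen A C u : (forall a, a \in A -> gen C a) -> gen A u -> gen C u.
Proof. move=> HAC; elim=> [|y a Ha _ IH]; [exact: gen0 | exact: gen_add IH (HAC _ Ha)]. Qed.

Lemma gen_lt B u c : gen B u -> u < c -> gen [seq y <- B | y < c] u.
Proof.
elim=> [|y a Ha _ IH] Hc; first exact: gen0.
apply: genS; last by apply: IH; lia.
by rewrite mem_filter Ha andbT; lia.
Qed.

Lemma gen_ge A c u : gen A u -> (forall a, a \in A -> c <= a) -> u = 0 \/ c <= u.
Proof.
move=> H Hc; elim: H => [|y a Ha _ IH]; first by left.
right; have := Hc _ Ha; lia.
Qed.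

Lemma gen_rcons ns x u : gen (rcons ns x) u ->
  gen ns u \/ exists v, gen (rcons ns x) v /\ u = v + x.
Proof.
elim=> [|y a Ha Hy IH]; first by left; exact: gen0.
move: Ha; rewrite mem_rcons inE => /orP[/eqP->|Ha].
  by right; exists y.
case: IH => [Hy'|[v [Hv ->]]]; first by left; exact: genS Ha Hy'.
right; exists (v + a); split; last by rewrite addnAC.
by apply: genS Hv; rewrite mem_rcons inE Ha orbT.
Qed.

Lemma path_bounds h t : path ltn h t -> forall y, y \in h :: t -> h <= y <= last h t.
Proof.
elim: t h => [|a t IH] h /=; first by move=> _ y; rewrite inE => /eqP->; rewrite leqnn.
move=> /andP[ha Hp] y; rewrite inE => /orP[/eqP->|Hy].
  have := IH a Hp a (mem_head _ _); lia.
have := IH a Hp y Hy; lia.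
Qed.

Lemma least_exists (P : nat -> Prop) n : P n -> exists w, is_least P w.
Proof.
elim/ltn_ind: n => n IH Pn.
case: (classic (exists y, y < n /\ P y)) => [[y [Hy Py]]|Hno]; first exact: IH Py.
exists n; split => // y Py; case: (ltnP y n) => // Hy.
by exfalso; apply: Hno; exists y.
Qed.

Lemma res_exists S m i : numerical_semigroup S -> 0 < m ->
  exists w, is_w S m i w.
Proof.
move=> [_ _ [N HN]] Hm; apply: (@least_exists _ (N * m + i)); split.
  apply: HN; nia.
by rewrite modnMDl.
Qed.

Theorem lemma4p1 (S : nat -> Prop) (ns : seq nat) (x : nat) :
  MANS S ->
  sorted ltn ns ->
  is_msg S ns ->
  2 <= size ns <= nth 0 ns 0 - 1 ->
  last 0 ns < x ->
  last 0 ns %% nth 0 ns 0 < x %% nth 0 ns 0 ->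
  (forall wa wb,
      is_w S (nth 0 ns 0) (x %% nth 0 ns 0 - 1) wa ->
      is_w S (nth 0 ns 0) (x %% nth 0 ns 0) wb ->
      wa < x < wb) ->
  MANS (gen (rcons ns x)) /\
  exists2 A', is_msg (gen (rcons ns x)) A' & size A' = (size ns).+1.
Proof.
move=> [nsS MS] Hsort [Huniq HgS Hmin] /andP[He1 He2] Hlx Hmod Hw.
case: ns Hsort Huniq HgS Hmin He1 He2 Hlx Hmod Hw => [//|h t] /= Hp Huniq HgS Hmin He1 He2 Hlx Hmod Hw.
have hb := @path_bounds h t Hp.
have h3 : 3 <= h by lia.
have hx : h < x by have := hb _ (mem_last h t); lia.
have xns : forall y, y \in h :: t -> y < x by move=> y /hb; lia.
set S' := gen (rcons (h :: t) x).
have SS' : forall u, S u -> S' u.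
  move=> u /HgS; apply: gen_sub => y Hy; by rewrite mem_rcons inE Hy orbT.
have ns0 : numerical_semigroup S'.
  split; [exact: gen0 | move=> ? ?; exact: gen_add |].
  case: nsS => _ _ [N HN]; exists N => n /HN; exact: SS'.
have multS : is_mult S h.
  split; first by split; [apply HgS; apply: gen_mem; exact: mem_head | lia].
  move=> y [/HgS Sy y0]; case: (@gen_ge _ h _ Sy) => //; first by move=> a /hb; lia.
  lia.
have multS' : is_mult S' h.
  split; first by split; [apply SS'; apply HgS; apply: gen_mem; exact: mem_head | lia].
  move=> y [Sy y0]; case: (@gen_ge _ h _ Sy) => //; last lia.
  move=> a; rewrite mem_rcons inE => /orP[/eqP->|/hb]; lia.
have [wa Hwa] := @res_exists S h (x %% h - 1) nsS (ltnW (ltnW h3)).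
have [wb Hwb] := @res_exists S h (x %% h) nsS (ltnW (ltnW h3)).
have /andP[wax xwb] := Hw _ _ Hwa Hwb.
have P' : forall u, S' u -> 2 <= u %% h -> exists tt, S' tt /\ tt < u /\ (tt %% h).+1 = u %% h.
  move=> u /gen_rcons [Su|[v [Sv ->]]] Hu.
    move/HgS: Su => Su.
    have [wj Hwj] := @least_exists (fun y => S y /\ y %% h = (u %% h) %% h) u (conj Su (esym (modn_mod _ _))).
    have [wi Hwi] := @res_exists S h (u %% h - 1) nsS (ltnW (ltnW h3)).
    have := MS h multS (u %% h - 1) (u %% h) wi wj.
    have := Hwj.2 u (conj Su (esym (modn_mod _ _))).
    have := ltn_pmod u (ltnW (ltnW h3)).
    case: (Hwi) => [[Swi wim] _] ? ? Hlt.
    exists wi; split; first exact: SS'.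
    have := Hlt ltac:(lia) ltac:(lia) ltac:(lia) Hwi Hwj. rewrite (@modn_small (u %% h - 1)) in wim; last lia. split; lia.
  exists (v + wa); split; first by apply: gen_add Sv (SS' _ Hwa.1.1).
  split; first lia.
  case: Hwa => [[_ wam] _]; rewrite (@modn_small (x %% h - 1)) in wam; last by have := ltn_pmod x (ltnW (ltnW h3)); lia.
  have r1 : 0 < x %% h by lia.
  rewrite -(modnDmr v wa) wam -(modnDmr v x) in Hu *.
  have E : v + x %% h = (v + (x %% h - 1)).+1 by lia.
  rewrite E in Hu *.
  move: Hu; rewrite !modnS; case: ifP => _ /=; lia.
have Q : forall d s i, S' s -> 0 < i -> s %% h = i + d.+1 ->
    exists tt, S' tt /\ tt < s /\ tt %% h = i.
  elim=> [|d IH] s i Ss Hi Hs.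
    have [tt [St [Hlt Hm]]] := P' s Ss ltac:(lia).
    exists tt; split => //; split => //; lia.
  have [tt [St [Hlt Hm]]] := P' s Ss ltac:(lia).
  have [t2 [St2 [Hlt2 Hm2]]] := IH tt i St Hi ltac:(lia).
  exists t2; split => //; split => //; lia.
split.
  split => // m' Hm' i j wi wj Hi Hij Hjm Hwi Hwj.
  have em : m' = h.
    apply/eqP; rewrite eqn_leq; apply/andP; split.
      by apply: Hm'.2; exact: multS'.1.
    by apply: multS'.2; exact: Hm'.1.
  subst m'.
  case: (Hwj) => [[Swj wjm] _].
  rewrite (modn_small Hjm) in wjm.
  have [tt [St [Hlt Hm]]] := Q (j - i - 1) wj i Swj Hi ltac:(lia).
  have Hti : tt %% h = i %% h by rewrite Hm modn_small //; lia.
  have := Hwi.2 tt (conj St Hti); lia.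
exists (rcons (h :: t) x); last by rewrite size_rcons.
split => //.
  rewrite rcons_uniq; apply/andP; split => //; apply/negP => /xns; lia.
move=> B sB [a Ha aB] HB.
have Bsub : forall y, y \in B -> y != x -> y \in h :: t.
  move=> y /sB; rewrite mem_rcons inE => /orP[/eqP->|//]; by rewrite eqxx.
move: Ha; rewrite mem_rcons inE => /orP[/eqP Eax|Ha].
  subst a.
  have : gen B x by apply/HB; apply: gen_mem; rewrite mem_rcons mem_head.
  have sB' : {subset B <= h :: t}.
    move=> y yB; apply: Bsub => //; apply/negP => /eqP Eyx; subst y; by rewrite yB in aB.
  move=> /(@gen_sub B (h :: t) x sB') /HgS Sx.
  have := Hwb.2 x (conj Sx (esym (modn_mod _ _))); lia.
have : gen B a by apply/HB; apply: gen_mem; rewrite mem_rcons inE Ha orbT.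
move=> Ga; have {}Ga := @gen_lt B a x Ga (xns _ Ha).
set B'' := [seq y <- h :: t | y != a].
have GB : gen B'' a.
  apply: gen_sub Ga => y; rewrite mem_filter => /andP[yx yB].
  rewrite mem_filter; apply/andP; split.
    by apply/negP => /eqP Eya; subst y; rewrite yB in aB.
  by apply: Bsub => //; rewrite neq_ltn yx.
apply: (Hmin B'').
- by move=> y; rewrite mem_filter => /andP[].
- by exists a => //; rewrite mem_filter eqxx.
move=> u; split.
  move=> H; apply HgS; apply: (@gen_sub B'' (h :: t) u) H => y; by rewrite mem_filter => /andP[].
move=> Su; have := proj2 (HgS u) Su; apply: gen_gen => y Hy.
case: (eqVneq y a) => [->//|ya]; apply: gen_mem; by rewrite mem_filter ya.
Qed.
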